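(* For a given temporal graph $G$ on $n$ vertices with lifetime $L$, one can build a temporal $\lfloor\log n\rfloor$-spanner $H$ of $G$ of size $O(Ln)$.
   Context: A temporal graph is an undirected graph $G=(V,E)$ with a labeling $\lambda:E\to\mathbb{N}^+$; its lifetime $L$ is the number of distinct labels used. A temporal path is a path whose traversed edges have non-decreasing labels in the order of traversal; its length is its number of edges, and $d_G(u,v)$ is the minimum length of a temporal path from $u$ to $v$ in $G$ ($+\infty$ if none). A temporal $\alpha$-spanner of $G$ is a subgraph $H$ with $V(H)=V$, $E(H)\subseteq E$ (same labels), such that $d_H(u,v)\le\alpha\, d_G(u,v)$ for all $u,v\in V$. Size means number of edges. *)

(* Defs.v *)
From mathcomp Require Import all_boot.
Set Implicit Arguments. Unset Strict Implicit. Unset Printing Implicit Defensive.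

(* Only the
   values of lam on E matter. *)
Definition temporal_graph (T : finType) (E : {set {set T}})
    (lam : {set T} -> nat) : Prop :=
  forall e, e \in E -> #|e| = 2 /\ 0 < lam e.

Definition lifetime (T : finType) (E : {set {set T}}) (lam : {set T} -> nat)
  : nat := size (undup [seq lam e | e <- enum E]).

(* [tpath_from E lam x l p]: starting at x, having last used label l,
   the walk x -> p_1 -> ... -> p_k uses edges of E whose labels are
   non-decreasing (and at least l). *)
Fixpoint tpath_from (T : finType) (E : {set {set T}}) (lam : {set T} -> nat)
    (x : T) (l : nat) (p : seq T) : bool :=
  match p with
  | [::] => true
  | y :: p' =>
      ([set x; y] \in E) && (l <= lam [set x; y])
      && tpath_from E lam y (lam [set x; y]) p'
  end.

(* A temporal path from u to v: the vertex sequence u :: p is a path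
   (no repeated vertex) ending in v, whose edges have non-decreasing labels.
   Its length (number of edges) is size p. *)
Definition is_tpath (T : finType) (E : {set {set T}}) (lam : {set T} -> nat)
    (u v : T) (p : seq T) : bool :=
  [&& uniq (u :: p), last u p == v & tpath_from E lam u 0 p].

(* H is a temporal alpha-spanner of (E, lam): H is a subgraph (same vertex set,
   subset of edges, same labels) and d_H(u,v) <= alpha * d_G(u,v) for all u v.
   The latter is unfolded: every temporal path in G of length k from u to v
   can be matched by a temporal path in H from u to v of length <= alpha*k
   (equivalent to the inequality on minimum lengths, with +oo conventions). *)
Definition temporal_spanner (T : finType) (E : {set {set T}})
    (lam : {set T} -> nat) (H : {set {set T}}) (alpha : nat) : Prop :=
  H \subset E /\
  forall (u v : T) (p : seq T), is_tpath E lam u v p ->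
    exists q : seq T, is_tpath H lam u v q /\ size q <= alpha * size p.

(* Main.v *)
Require Import Defs.
From mathcomp Require Import all_boot zify.
From Stdlib Require Import Classical.
Set Implicit Arguments. Unset Strict Implicit. Unset Printing Implicit Defensive.

Section G.
Variable T : finType.
Implicit Types (F G : {set {set T}}) (s : seq T).

Definition adj F : rel T := fun a b => [set a; b] \in F.

Lemma adjC F a b : adj F a b = adj F b a.
Proof. by rewrite /adj setUC. Qed.

Definition sz2 F := forall e, e \in F -> #|e| = 2.

Definition Bad F t := exists a b s, [/\ [set a; b] \in F,
  path (adj (F :\ [set a; b])) a s, last a s = b & size s <= t].

Fixpoint nb3 s : bool :=
  match s with
  | a :: s' => match s' with
               | _ :: c :: _ => (a != c) && nb3 s'
               | _ => true end
  | [::] => true end.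

Lemma adj_neq F a b : sz2 F -> adj F a b -> a != b.
Proof.
move=> H; rewrite /adj => /H; case: eqP => // ->.
by rewrite setUid cards1.
Qed.

Lemma adj_sub F1 F2 : F1 \subset F2 -> subrel (adj F1) (adj F2).
Proof. by move=> /subsetP S a b; rewrite /adj => /S. Qed.

Lemma lemU F t : sz2 F -> ~ Bad F t -> forall c,
  sorted (adj F) c -> nb3 c -> size c <= t.+2 -> uniq c.
Proof.
move=> H2 NB; elim=> [//|x s IH] /= Hp Hn Hs.
have Hn' : nb3 s by move: Hn; case: s {IH Hp Hs} => [|y [|z s]] //= /andP[].
have Hu : uniq s.
  by apply: IH => //; [exact: path_sorted Hp | exact: ltnW].
rewrite Hu andbT; apply/negP => Hx.
case/splitPr: Hx IH Hp Hn Hs Hn' Hu => s1 s2 IH Hp Hn Hs Hn' Hu.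
case: s1 Hp Hn Hs Hu {IH Hn'} => [|y [|z s1]] /= Hp Hn Hs Hu.
- by move: Hp => /andP[/(adj_neq H2)]; rewrite eqxx.
- by move: Hn; rewrite eqxx.
apply: NB; exists y, x, (z :: s1 ++ [:: x]); split.
- by move: Hp => /andP[]; rewrite adjC.
- have [P1 P3] : path (adj F) y (z :: s1) /\ adj F (last z s1) x.
    move: Hp => /and3P[_ A B]; move: B; rewrite cat_path => /andP[C /= /andP[D _]].
    by split => //=; rewrite A C.
  have Hxs : x \notin y :: z :: s1.
    have U : uniq ((y :: z :: s1) ++ x :: s2) by exact: Hu.
    move: U; rewrite cat_uniq => /and3P[_ /hasPn H _].
    by apply: H; rewrite inE eqxx.
  have Hly : last z s1 != y.
    move: Hu => /andP[Hy _]; apply/negP => /eqP Ey.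
    by move: Hy; rewrite -Ey -cat_cons mem_cat mem_last.
  rewrite (cat_path _ _ (z :: s1)) /= andbT; apply/andP; split; last first.
    move: P3; rewrite /adj !inE => ->; rewrite andbT; apply/negP => /eqP E.
    have : last z s1 \in [set y; x] by rewrite -E !inE eqxx.
    rewrite !inE (negPf Hly) /= => /eqP Ex.
    by move: Hxs; rewrite -Ex inE (mem_last z s1) orbT.
  apply: (sub_in_path (P := [pred a | a != x])) P1.
    move=> a b /= Ha Hb; rewrite /adj !inE => ->; rewrite andbT.
    apply/negP => /eqP E.
    have : x \in [set a; b] by rewrite E !inE eqxx orbT.
    by rewrite !inE ![x == _]eq_sym (negPf Ha) (negPf Hb).
  apply/allP => a Ha /=; apply/negP => /eqP E; subst a.
  by rewrite Ha in Hxs.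
- by rewrite /= last_cat.
- by move: Hs; rewrite /= !size_cat /=; lia.
Qed.
Lemma nb3_cons3 a b c w : nb3 [:: a, b, c & w] = (a != c) && nb3 [:: b, c & w].
Proof. by []. Qed.

Lemma nb3J u y x v : nb3 (u ++ [:: y, x & v]) = nb3 (u ++ [:: y; x]) && nb3 [:: y, x & v].
Proof.
elim: u => [|a u IH]; first by [].
case: u IH => [|b [|d u]] IH.
- by rewrite /= andbT.
- by move: IH; rewrite /= => ->; rewrite andbA.
- by move: IH; rewrite !cat_cons !nb3_cons3 => ->; rewrite andbA.
Qed.

Lemma card_bigcup_ge (A : T -> {set T}) k : forall n (N : {set T}), #|N| = n ->
  (forall y y', y \in N -> y' \in N -> y != y' -> [disjoint A y & A y']) ->
  (forall y, y \in N -> k <= #|A y|) -> #|N| * k <= #|\bigcup_(y in N) A y|.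
Proof.
elim=> [|n IH] N HN Hd Hk; first by rewrite HN.
have [y0 Hy0] : exists y0, y0 \in N.
  by apply/set0Pn; apply/negP => /eqP E; move: HN; rewrite E cards0.
have EN : N = [set y0] :|: (N :\ y0) by rewrite setD1K.
have HN' : #|N :\ y0| = n by move: HN; rewrite (cardsD1 y0) Hy0 add1n => -[].
rewrite {2}EN bigcup_setU big_set1 cardsU.
have -> : A y0 :&: \bigcup_(i in N :\ y0) A i = set0.
  apply: disjoint_setI0; apply: bigcup_disjoint => i.
  rewrite !inE => /andP[Hi HiN]; apply: Hd => //; by rewrite eq_sym.
rewrite cards0 subn0 HN mulSn leq_add //; first exact: Hk.
rewrite -HN'; apply: IH => //.
  by move=> y y'; rewrite !inE => /andP[_ ?] /andP[_ ?]; apply: Hd.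
by move=> y; rewrite !inE => /andP[_ ?]; apply: Hk.
Qed.

Section Ends.
Variables (F : {set {set T}}) (W : {set T}).

Definition Nb (p x : T) : {set T} := [set y in W | adj F x y && (y != p)].

Fixpoint Ends r (p x : T) : {set T} :=
  if r is r'.+1 then \bigcup_(y in Nb p x) Ends r' x y else [set x].

Lemma rev2 (a b : T) s : rev [:: a, b & s] = rev s ++ [:: b; a].
Proof. by rewrite !rev_cons -!cats1 -catA. Qed.

Lemma ends_walk r : forall p x z, z \in Ends r p x -> exists s,
  [/\ path (adj F) x s, last x s = z, size s = r, nb3 [:: p, x & s]
    & nb3 (rev [:: p, x & s])].
Proof.
elim: r => [|r IH] p x z /=.
  by rewrite inE => /eqP ->; exists [::].
case/bigcupP => y; rewrite inE => /andP[Hy /andP[Hxy Hyp]] /IH [s [Hs Hl Hz N1 N2]].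
exists (y :: s); split => //=; first by rewrite Hxy.
  by rewrite Hz.
  by rewrite eq_sym Hyp.
rewrite (rev_cons p) -cats1 rev2 -catA /= nb3J.
by move: N2; rewrite rev2 => -> /=; rewrite Hyp.
Qed.
Lemma ends_disj t r x y y' : sz2 F -> ~ Bad F t -> 2 * r + 1 <= t ->
  y != y' -> adj F x y -> adj F x y' -> [disjoint Ends r x y & Ends r x y'].
Proof.
move=> H2 NB Ht Hyy' Hxy Hxy'; rewrite disjoint_subset; apply/subsetP => z Z1; rewrite inE; apply/negP => Z2.
have [s [Hs Hl Hsz _ N2]] := ends_walk Z1.
have [s' [Hs' Hl' Hsz' N1' _]] := ends_walk Z2.
have Hc : rev [:: x, y & s] = z :: rev (belast x (y :: s)).
  by rewrite (lastI x (y :: s)) rev_rcons /= Hl.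
have U : uniq (rev [:: x, y & s] ++ y' :: s').
  apply: (lemU H2 NB).
  - rewrite Hc /= cat_path; apply/andP; split.
      have := rev_path (adj F) x (y :: s); rewrite /= Hl => ->.
      rewrite adjC Hxy /=; apply: sub_path Hs => a b; by rewrite adjC.
    rewrite /= Hs' andbT.
    have -> : last z (rev (x :: belast y s)) = x by rewrite rev_cons last_rcons.
    exact: Hxy'.
  - rewrite rev2 -catA /= nb3J; apply/andP; split.
      by move: N2; rewrite rev2.
    by rewrite nb3_cons3 Hyy'.
  - rewrite size_cat size_rev /= Hsz Hsz'; lia.
move: U; rewrite cat_uniq => /and3P[_ /hasPn /(_ z) H _].
have : z \in y' :: s' by rewrite -Hl' mem_last.
move/H; by rewrite Hc inE eqxx.
Qed.

Lemma ends_card d t : sz2 F -> ~ Bad F t ->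
  (forall x, x \in W -> d < #|[set y in W | adj F x y]|) ->
  forall r p x, 2 * r <= t.+1 -> x \in W -> d ^ r <= #|Ends r p x|.
Proof.
move=> H2 NB Hdeg; elim=> [|r IH] p x Hr Hx /=; first by rewrite cards1.
have HN : d <= #|Nb p x|.
  have := Hdeg x Hx.
  have Sub : [set y in W | adj F x y] \subset p |: Nb p x.
    apply/subsetP => y; rewrite !inE => /andP[-> ->] /=.
    by case: eqP.
  move=> /leq_trans /(_ (subset_leq_card Sub)); rewrite cardsU1; case: (_ \notin _) => //.
  by rewrite add0n => /ltnW.
rewrite expnS.
apply: leq_trans (card_bigcup_ge (k := d ^ r) (erefl _) _ _).
- by rewrite leq_mul2r HN orbT.
- move=> y y'; rewrite !inE => /and3P[_ Hxy _] /and3P[_ Hxy' _] Hyy'.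
  apply: (ends_disj H2 NB) => //; lia.
- move=> y; rewrite inE => /andP[Hy _]; apply: IH => //; lia.
Qed.

End Ends.

Lemma peel (F : {set {set T}}) d : sz2 F -> forall n (W : {set T}), #|W| <= n ->
  (exists W' : {set T}, [/\ W' \subset W, (exists x, x \in W') &
      forall x, x \in W' -> d < #|[set y in W' | adj F x y]|])
  \/ #|[set e in F | e \subset W]| <= d * #|W|.
Proof.
move=> H2; elim=> [|n IH] W HW.
  right; move: HW; rewrite leqn0 cards_eq0 => /eqP ->.
  rewrite cards0 muln0 leqn0 cards_eq0; apply/eqP/setP => e; rewrite !inE.
  apply/negP => /andP[He]; rewrite subset0 => /eqP E.
  by move: (H2 e He); rewrite E cards0.
case: (boolP [forall x in W, d < #|[set y in W | adj F x y]|]) => [/forall_inP Hall|].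
  case: (set_0Vmem W) => [E|[x Hx]]; last by left; exists W; split => //; exists x.
  right; rewrite E cards0 muln0 leqn0 cards_eq0; apply/eqP/setP => e; rewrite !inE.
  apply/negP => /andP[He]; rewrite subset0 => /eqP E'.
  by move: (H2 e He); rewrite E' cards0.
move=> /forall_inPn [x Hx]; rewrite -leqNgt => Hd.
have HW' : #|W :\ x| <= n by move: HW; rewrite (cardsD1 x W) Hx add1n ltnS.
case: (IH _ HW') => [[W' [S1 S2 S3]]|Hr].
  left; exists W'; split => //; apply: subset_trans S1 _; exact: subsetDl.
right.
have Sub : [set e in F | e \subset W] \subset
   [set e in F | e \subset W :\ x] :|: [set [set x; y] | y in [set y in W | adj F x y]].
  apply/subsetP => e; rewrite !inE => /andP[He HeW].
  case: (boolP (x \in e)) => Hxe; last first.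
    apply/orP; left; rewrite He /=; apply/subsetP => z Hz; rewrite !inE.
    apply/andP; split; last exact: (subsetP HeW).
    by apply/negP => /eqP E; subst z; rewrite Hz in Hxe.
  apply/orP; right; apply/imsetP.
  have /eqP/cards2P [a [b [Hab Eab]]] := H2 e He.
  move: Hxe; rewrite Eab !inE => /orP[/eqP Ea|/eqP Eb].
    exists b; last by rewrite Ea.
    rewrite inE /adj Ea -Eab He andbT; apply: (subsetP HeW); by rewrite Eab !inE eqxx orbT.
  exists a; last by rewrite Eb setUC.
  rewrite inE /adj Eb setUC -Eab He andbT; apply: (subsetP HeW); by rewrite Eab !inE eqxx.
apply: leq_trans (subset_leq_card Sub) _.
apply: leq_trans (leq_card_setU _ _) _.
apply: leq_trans (leq_add Hr (leq_trans (leq_imset_card _ _) Hd)) _.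
by rewrite (cardsD1 x W) Hx add1n mulnSr.
Qed.

Lemma size_bound (F : {set {set T}}) t : sz2 F -> ~ Bad F t ->
  t = trunc_log 2 #|T| -> #|F| <= 16 * #|T|.
Proof.
move=> H2 NB Ht.
case: (peel 16 H2 (leqnn #|[set: T]|)) => [[W' [_ [x Hx] Hdeg]]|].
  exfalso.
  have [r [Hr1 Hr2]] : exists r, 2 * r <= t.+1 /\ t <= 2 * r.
    exists (t.+1)./2; have := odd_double_half t.+1; have := leq_b1 (odd t.+1).
    rewrite -muln2; lia.
  have C1 := ends_card H2 NB Hdeg x Hr1 Hx.
  have C2 : #|Ends F W' r x x| <= #|T| by apply: max_card.
  have C3 : 16 < #|T| by apply: leq_trans (Hdeg x Hx) (max_card _).
  have C4 : #|T| < 2 ^ t.+1 by rewrite Ht; apply: trunc_log_ltn.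
  have Ht1 : 1 <= t.
    by case: (posnP t) C4 => [->|//]; rewrite expn1; lia.
  have : 2 ^ t.+1 <= 16 ^ r.
    have -> : 16 = 2 ^ 4 by [].
    rewrite -expnM leq_exp2l //; lia.
  lia.
have -> : [set e in F | e \subset [set: T]] = F.
  by apply/setP => e; rewrite !inE subsetT andbT.
by rewrite cardsT.
Qed.

Definition walk_le (F : {set {set T}}) t u v :=
  exists s, [/\ path (adj F) u s, last u s = v & size s <= t].

Lemma walk_rev (F : {set {set T}}) u s : path (adj F) u s ->
  path (adj F) (last u s) (rev (belast u s)) /\ last (last u s) (rev (belast u s)) = u.
Proof.
move=> Hp; split.
  rewrite rev_path; apply: sub_path Hp => a b; by rewrite adjC.
by case: s Hp => [|a s] //= _; rewrite rev_cons last_rcons.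
Qed.

Lemma walk_le_sym F t u v : walk_le F t u v -> walk_le F t v u.
Proof.
case=> s [Hp Hl Hs]; have [H1 H2] := walk_rev Hp; rewrite Hl in H1 H2.
by exists (rev (belast u s)); rewrite size_rev size_belast.
Qed.

Lemma walk_le_sub F1 F2 t u v : F1 \subset F2 -> walk_le F1 t u v -> walk_le F2 t u v.
Proof.
move=> S [s [Hp Hl Hs]]; exists s; split => //; apply: sub_path Hp; exact: adj_sub.
Qed.

Lemma orient F t u v x y : x \in [set u; v] -> y \in [set u; v] -> x != y ->
  walk_le F t x y -> walk_le F t u v.
Proof.
rewrite !inE => /orP[]/eqP-> /orP[]/eqP->; rewrite ?eqxx //.
by move=> _ /walk_le_sym.
Qed.

Lemma decomp (G : {set {set T}}) (e : {set T}) a s : path (adj (e |: G)) a s ->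
  path (adj G) a s \/ exists x y s1 s2, [/\ x \in e, y \in e,
     path (adj G) a s1 /\ last a s1 = x, path (adj G) y s2 /\ last y s2 = last a s
   & size s1 + size s2 < size s].
Proof.
elim: s a => [|c s IH] a /=; first by left.
move=> /andP[Hac Hp]; have := IH c Hp.
case: (boolP (adj G a c)) => HG.
  case=> [Hp'|[x [y [s1 [s2 [Hx Hy [P1 L1] [P2 L2] Hsz]]]]]]; first by left.
  right; exists x, y, (c :: s1), s2; split => //=.
  by rewrite HG P1 L1.
have Hce : [set a; c] = e.
  by move: Hac HG; rewrite /adj !inE => /orP[/eqP //|->].
have Ha : a \in e by rewrite -Hce !inE eqxx.
have Hc : c \in e by rewrite -Hce !inE eqxx orbT.
case=> [Hp'|[x [y [s1 [s2 [Hx Hy [P1 L1] [P2 L2] Hsz]]]]]].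
  by right; exists a, c, [::], s; split.
right; exists a, y, [::], s2; split => //=.
by move: Hsz; lia.
Qed.

Lemma set2_neq (u v : T) : #|[set u; v]| = 2 -> u != v.
Proof. by case: eqP => // ->; rewrite setUid cards1. Qed.

Lemma greedy t (es : seq {set T}) : 1 <= t -> (forall e, e \in es -> #|e| = 2) ->
  exists S : {set {set T}}, [/\ S \subset [set e | e \in es], ~ Bad S t &
    forall e u v, e \in es -> e = [set u; v] -> walk_le S t u v].
Proof.
move=> Ht; elim: es => [|e es IH] Hes.
  exists set0; split; first exact: sub0set.
    by case=> a [b [s [H _ _ _]]]; rewrite inE in H.
  by [].
have [S [Ssub NB Hw]] : exists S : {set {set T}}, [/\ S \subset [set e | e \in es], ~ Bad S t &
    forall e u v, e \in es -> e = [set u; v] -> walk_le S t u v].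
  by apply: IH => e' He'; apply: Hes; rewrite inE He' orbT.
have H2S : sz2 S.
  move=> e' /(subsetP Ssub); rewrite inE => He'; apply: Hes; by rewrite inE He' orbT.
have He2 : #|e| = 2 by apply: Hes; rewrite inE eqxx.
have /eqP/cards2P [u [v [Huv Ee]]] := He2.
have SubS : [set e | e \in es] \subset [set e0 | e0 \in e :: es].
  by apply/subsetP => e'; rewrite !inE => ->; rewrite orbT.
case: (classic (walk_le S t u v)) => Hwuv.
  exists S; split => //; first exact: subset_trans Ssub SubS.
  move=> e' u' v'; rewrite inE => /orP[/eqP ->|]; last exact: Hw.
  move=> E'; have Hne : u' != v' by apply: set2_neq; rewrite -E'.
  apply: (orient (x := u) (y := v)) => //; by rewrite -E' Ee !inE eqxx ?orbT.
exists (e |: S); split.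
- apply/subsetP => e'; rewrite in_setU1 => /orP[/eqP ->|/(subsetP Ssub)].
    by rewrite !inE eqxx.
  by rewrite !inE => ->; rewrite orbT.
- case=> a [b [s [Hf Hp Hl Hs]]].
  have H2S' : sz2 (e |: S).
    move=> e0; rewrite in_setU1 => /orP[/eqP->//|]; exact: H2S.
  have Hab : a != b.
    have := H2S' _ Hf; exact: set2_neq.
  case: (eqVneq [set a; b] e) => Hfe.
    apply: Hwuv; apply: (orient (x := a) (y := b)) => //.
    + by rewrite -Ee -Hfe !inE eqxx.
    + by rewrite -Ee -Hfe !inE eqxx orbT.
    exists s; split => //; apply: sub_path Hp; apply: adj_sub.
    apply/subsetP => e'; rewrite !inE => /andP[Hne /orP[/eqP E|//]].
    by rewrite E Hfe eqxx in Hne.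
  have HfS : [set a; b] \in S.
    by move: Hf; rewrite in_setU1 (negPf Hfe).
  have Hp2 : path (adj (e |: (S :\ [set a; b]))) a s.
    apply: sub_path Hp; apply: adj_sub; apply/subsetP => e'.
    rewrite in_setD1 !in_setU1 in_setD1 => /andP[Hne /orP[->//|He']].
    by rewrite Hne He' orbT.
  case: (decomp Hp2) => [Hp3|[x [y [s1 [s2 [Hx Hy [P1 L1] [P2 L2] Hsz]]]]]].
    by apply: NB; exists a, b, s.
  case: (eqVneq x y) => Hxy.
    subst y; apply: NB; exists a, b, (s1 ++ s2); split => //.
    + by rewrite cat_path P1 L1 P2.
    + by rewrite last_cat L1 L2.
    + rewrite size_cat; apply: leq_trans Hs; exact: ltnW.
  apply: Hwuv; apply: (orient (x := x) (y := y)); rewrite -?Ee //.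
  have SD : S :\ [set a; b] \subset S by apply: subsetDl.
  have [R1 R1l] := walk_rev P1; rewrite L1 in R1 R1l.
  have [R2 R2l] := walk_rev P2; rewrite L2 Hl in R2 R2l.
  exists (rev (belast a s1) ++ b :: rev (belast y s2)); split.
  + rewrite cat_path R1l /=; apply/and3P; split.
    * apply: sub_path R1; exact: adj_sub.
    * exact: HfS.
    * apply: sub_path R2; exact: adj_sub.
  + by rewrite last_cat R1l /= R2l.
  + rewrite size_cat /= !size_rev !size_belast addnS; exact: leq_trans Hsz Hs.
- move=> e' u' v'; rewrite inE => /orP[/eqP ->|He' E'].
    move=> E'; exists [:: v']; split => //=; rewrite andbT /adj -E' !inE eqxx //.
  apply: walk_le_sub (Hw _ _ _ He' E'); exact: subsetUr.
Qed.

End G.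

Section Temporal.
Variable T : finType.
Implicit Types (E H : {set {set T}}).

Definition ladj H (lam : {set T} -> nat) l : rel T :=
  fun a b => ([set a; b] \in H) && (lam [set a; b] == l).

Lemma tp_mono H lam x l1 l2 q : l1 <= l2 -> tpath_from H lam x l2 q -> tpath_from H lam x l1 q.
Proof.
case: q => [//|y q] /= Hl /andP[/andP[A B] C]; rewrite A C /=.
by rewrite andbT; exact: leq_trans Hl B.
Qed.

Lemma tp_split H lam q1 : forall x y l1 q2, tpath_from H lam y l1 (q1 ++ x :: q2) ->
  exists l2, l1 <= l2 /\ tpath_from H lam x l2 q2.
Proof.
elim: q1 => [|a q1 IH] x y l1 q2 /=.
  by case/andP => /andP[_ Hl] Ht; exists (lam [set y; x]).
case/andP => /andP[_ Hl] /IH [l2 [Hl2 Ht]]; exists l2; split => //; exact: leq_trans Hl Hl2.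
Qed.

Lemma tp_short H lam : sz2 H -> forall q x l, tpath_from H lam x l q ->
  exists q', [/\ uniq (x :: q'), tpath_from H lam x l q', last x q' = last x q
     & size q' <= size q].
Proof.
move=> H2; elim=> [|y q IH] x l /=.
  by move=> _; exists [::].
case/andP => /andP[He Hl] /IH [q'' [U Ht Hlast Hsz]].
case: (boolP (x \in y :: q'')) => Hx; last first.
  exists (y :: q''); split => //=.
  - by rewrite Hx.
  - by rewrite He Hl.
have Hxy : x != y by have := adj_neq H2 He.
move: Hx; rewrite inE (negPf Hxy) /= => Hx.
case/splitPr: Hx U Ht Hlast Hsz => q1 q2 U Ht Hlast Hsz.
have [l2 [Hl2 Ht2]] := tp_split Ht.
exists q2; split.
- by move: U; rewrite -cat_cons cat_uniq => /and3P[_ _].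
- apply: tp_mono Ht2; exact: leq_trans Hl Hl2.
- by rewrite -Hlast last_cat.
- move: Hsz; rewrite size_cat /=; clear; lia.
Qed.

Lemma tp_cat_walk H lam l l' w : forall x q, path (ladj H lam l') x w -> l <= l' ->
  tpath_from H lam (last x w) l' q -> tpath_from H lam x l (w ++ q).
Proof.
elim: w l => [|a w IH] l x q /=.
  by move=> _ Hl; apply: tp_mono.
case/andP => /andP[Ha /eqP La] Hw Hl Ht; rewrite Ha La Hl /=.
by apply: IH => //.
Qed.

Lemma tp_build E H lam t : (forall e u v, e \in E -> e = [set u; v] ->
    exists w, [/\ path (ladj H lam (lam e)) u w, last u w = v & size w <= t]) ->
  forall p x l, tpath_from E lam x l p -> exists q,
    [/\ tpath_from H lam x l q, last x q = last x p & size q <= t * size p].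
Proof.
move=> Hw; elim=> [|y p IH] x l /=.
  by move=> _; exists [::]; rewrite muln0.
case/andP => /andP[He Hl] /IH [q [Hq Hql Hqs]].
have [w [Pw Lw Sw]] := Hw _ x y He (erefl _).
exists (w ++ q); split.
- by apply: tp_cat_walk Pw Hl _; rewrite Lw.
- by rewrite last_cat Lw.
- by rewrite size_cat mulnS leq_add.
Qed.

Lemma build_H E (lam : {set T} -> nat) t : 1 <= t -> sz2 E -> t = trunc_log 2 #|T| ->
  forall ls : seq nat, exists H, [/\ H \subset E, #|H| <= 16 * #|T| * size ls &
   forall e u v, e \in E -> lam e \in ls -> e = [set u; v] ->
    exists w, [/\ path (ladj H lam (lam e)) u w, last u w = v & size w <= t]].
Proof.
move=> Ht H2 Htl; elim=> [|l ls [H0 [S0 C0 W0]]].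
  exists set0; split; [exact: sub0set | by rewrite cards0 | by []].
have Hes : forall e, e \in [seq e <- enum E | lam e == l] -> #|e| = 2.
  by move=> e; rewrite mem_filter mem_enum => /andP[_ /H2].
have [S [SS NB WS]] := @greedy T t [seq e <- enum E | lam e == l] Ht Hes.
have SE : forall e, e \in S -> (e \in E) && (lam e == l).
  by move=> e /(subsetP SS); rewrite inE mem_filter mem_enum andbC.
have H2S : sz2 S by move=> e /SE /andP[/H2].
exists (S :|: H0); split.
- apply/subsetP => e; rewrite inE => /orP[/SE/andP[]//|]; exact: (subsetP S0).
- apply: leq_trans (leq_card_setU _ _) _.
  rewrite /= mulnS; apply: leq_add => //; exact: size_bound H2S NB Htl.
- move=> e u v He; rewrite inE => /orP[/eqP Le|Hls] Ee.
    have Hin : e \in [seq e <- enum E | lam e == l] by rewrite mem_filter mem_enum He Le eqxx.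
    have [s [Ps Ls Ss]] := WS e u v Hin Ee.
    exists s; split => //; apply: sub_path Ps => a b Hab.
    have /andP[_ /eqP Lab] := SE _ Hab.
    have Hab' : [set a; b] \in S := Hab.
    by rewrite /ladj inE Hab' Lab Le eqxx.
  have [w [Pw Lw Sw]] := W0 e u v He Hls Ee.
  exists w; split => //; apply: sub_path Pw => a b /andP[Hab Lab].
  by rewrite /ladj inE Hab Lab orbT.
Qed.
End Temporal.

Theorem corollary23 :
  exists C : nat,
    forall (T : finType) (E : {set {set T}}) (lam : {set T} -> nat),
      temporal_graph E lam ->
      exists H : {set {set T}},
        temporal_spanner E lam H (trunc_log 2 #|T|) /\
        #|H| <= C * (lifetime E lam * #|T|).
Proof.
exists 16 => T E lam HG.
have H2 : sz2 E by move=> e /HG [].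
case: (leqP 2 #|T|) => Hn.
  set t := trunc_log 2 #|T|.
  have Ht : 1 <= t by rewrite /t trunc_log_gt0.
  have [H [SH CH WH]] := build_H lam Ht H2 (erefl _) (undup [seq lam e | e <- enum E]).
  exists H; split.
    split => // u v p /and3P[U /eqP L Tp].
    have WH' : forall e u v, e \in E -> e = [set u; v] ->
        exists w, [/\ path (ladj H lam (lam e)) u w, last u w = v & size w <= t].
      move=> e u' v' He Ee; apply: WH => //.
      by rewrite mem_undup; apply/mapP; exists e; rewrite ?mem_enum.
    have [q [Tq Lq Sq]] := tp_build WH' Tp.
    have H2H : sz2 H by move=> e /(subsetP SH) /H2.
    have [q' [U' Tq' Lq' Sq']] := tp_short H2H Tq.
    exists q'; split; last exact: leq_trans Sq' Sq.
    by rewrite /is_tpath U' Tq' Lq' Lq L eqxx.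
  by move: CH; rewrite /lifetime -mulnA [#|T| * _]mulnC.
exists set0; split; last by rewrite cards0.
split; first by rewrite sub0set.
move=> u v [|y p] /and3P[U /eqP L Tp].
  by move: L => /= <-; exists [::]; rewrite /is_tpath /= eqxx.
exfalso; move: Tp => /= /andP[/andP[He _] _].
have := H2 _ He => E2.
have := subset_leq_card (subsetT [set u; y]); rewrite cardsT E2 => H'.
by move: Hn; rewrite ltnNge H'.
Qed.
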